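(* Let $P$ be a finite poset, $\mathcal{J}\subseteq\mathrm{Hom}(P,\mathbb{N})$ a poset ideal, and $S$ a finite set with $\mathrm{Supp}(\mathcal{J})\subseteq S\subseteq P\times\mathbb{N}$, given the induced partial order from $P\times\mathbb{N}$. Let $R$ be a poset and $\phi:S\to R$ an isotone map with right strict chain fibers. Let $B$ be a basis of the kernel of the $k$-linear map $\bigoplus_{s\in S}k x_s\to\bigoplus_{r\in R}k x_r$, $x_s\mapsto x_{\phi(s)}$, consisting of differences $x_{s}-x_{s'}$ with $\phi(s)=\phi(s')$. Then $B$ is a regular sequence on $k[x_S]/L(\mathcal{J},P)$.
   Context: $\mathbb{N}=\{0,1,2,\dots\}$; $\mathrm{Hom}(P,\mathbb{N})$ is the set of isotone maps $P\to\mathbb{N}$ ordered pointwise; $\mathcal{J}^c$ is the complement of $\mathcal{J}$. The ascent of $\psi\in\mathrm{Hom}(P,\mathbb{N})$ is $\Lambda\psi=\{(p,i): \psi(q)\le i<\psi(p)\ \forall q<p\}$. A marker for $\mathcal{J}$ is a poset ideal $I\subseteq P$ with an isotone $\alpha:I\to\mathbb{N}$ such that every isotone extension of $\alpha$ to $P$ lies in $\mathcal{J}$; its graph is $\Gamma\alpha=\{(p,\alpha(p)):p\in I\}$. With $k$ a field and $m_T=\prod_{t\in T}x_t$, the letterplace ideal $L(\mathcal{J},P)$ is the monomial ideal in the variables $x_{p,i}$ generated by $m_{\Lambda\psi}$, $\psi\in\mathcal{J}^c$, and the co-letterplace ideal $L(P,\mathcal{J})$ is generated by $m_{\Gamma\alpha}$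 over markers $\alpha$. $\mathrm{Supp}(\mathcal{J})$ is the (finite) set of $(p,i)$ such that $x_{p,i}$ divides some minimal monomial generator of $L(\mathcal{J},P)$ (equivalently of its Alexander dual $L(P,\mathcal{J})$); for $S\supseteq\mathrm{Supp}(\mathcal{J})$ these ideals are regarded as ideals of $k[x_S]$ generated by their minimal generators. $P^{\mathrm{op}}$ is the opposite poset and $P^{\mathrm{op}}\times\mathbb{N}$ has the product order. The map $\phi$ has right strict chain fibers if each fiber $\phi^{-1}(r)$ is a chain in $P^{\mathrm{op}}\times\mathbb{N}$ whose elements have pairwise distinct second coordinates; i.e. if $(p,i)\ne(q,j)$ lie in a fiber with $i\le j$, then $i<j$ and $p\ge q$ in $P$. *)

(* Defs.v *)
From HB Require Import structures.
From mathcomp Require Import all_boot all_order all_algebra.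
From mathcomp Require Import finmap.
From mathcomp Require Import mpoly.

Set Implicit Arguments.
Unset Strict Implicit.
Unset Printing Implicit Defensive.

Import Order.Theory GRing.Theory.
Local Open Scope fset_scope.

Section Letterplace.
Context {d : Order.disp_t} (P : finPOrderType d).

Definition isotone (psi : {ffun P -> nat}) : Prop :=
  forall p q : P, (p <= q)%O -> psi p <= psi q.

Definition poset_ideal_Hom (J : {ffun P -> nat} -> Prop) : Prop :=
  (forall psi, J psi -> isotone psi) /\
  (forall psi psi', J psi -> isotone psi' -> (forall p, psi' p <= psi p) -> J psi').

Definition Jcompl (J : {ffun P -> nat} -> Prop) (psi : {ffun P -> nat}) : Prop :=
  isotone psi /\ ~ J psi.

Definition ascent (psi : {ffun P -> nat}) (x : P * nat) : bool :=
  [forall q : P, (q < x.1)%O ==> (psi q <= x.2)] && (x.2 < psi x.1).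

(* m_{Lambda psi} is a minimal monomial generator of L(J,P): psi in J^c and
   no generator m_{Lambda psi'} (psi' in J^c) properly divides it, i.e. no
   Lambda psi' is a proper subset of Lambda psi. *)
Definition min_gen (J : {ffun P -> nat} -> Prop) (psi : {ffun P -> nat}) : Prop :=
  Jcompl J psi /\
  ~ (exists psi', Jcompl J psi' /\ (forall x, ascent psi' x -> ascent psi x)
                  /\ (exists x, ascent psi x && ~~ ascent psi' x)).

(* Supp(J): the (p,i) such that x_{p,i} divides some minimal generator *)
Definition Supp (J : {ffun P -> nat} -> Prop) (x : P * nat) : Prop :=
  exists psi, min_gen J psi /\ ascent psi x.

End Letterplace.

Section Ring.
Context {d : Order.disp_t} (P : finPOrderType d) (k : fieldType)
        (S : {fset (P * nat)}).

Definition polyS := {mpoly k[#|{: S}|]}.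

Definition xv (s : S) : polyS := 'X_(enum_rank s).

Definition monS (T : pred (P * nat)) : polyS := (\prod_(s : S | T (val s)) xv s)%R.

(* the letterplace ideal L(J,P) of k[x_S]: generated by its minimal generators *)
Definition LP_gen (J : {ffun P -> nat} -> Prop) (f : polyS) : Prop :=
  exists psi, min_gen J psi /\ f = monS (ascent psi).

End Ring.

Section Reg.
Context (A : comNzRingType).

Definition in_ideal (G : A -> Prop) (f : A) : Prop :=
  exists (n : nat) (c g : 'I_n -> A),
    (forall i, G (g i)) /\ f = (\sum_(i < n) c i * g i)%R.

Definition gens_with (G : A -> Prop) (l : seq A) (g : A) : Prop := G g \/ g \in l.

(* b_1,...,b_m is weakly regular on A/I (I generated by G): each b_j is a
   non-zero-divisor on A/(I + (b_1,...,b_{j-1})) *)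
Definition weakly_regular (G : A -> Prop) (bs : seq A) : Prop :=
  forall j, j < size bs -> forall f : A,
    in_ideal (gens_with G (take j bs)) (nth 0%R bs j * f)%R ->
    in_ideal (gens_with G (take j bs)) f.

(* regular sequence on A/I: weakly regular and (A/I)/(b_1..b_m)(A/I) <> 0 *)
Definition regular_seq (G : A -> Prop) (bs : seq A) : Prop :=
  weakly_regular G bs /\ ~ in_ideal (gens_with G bs) 1%R.

End Reg.

Section Lin.
Context {d : Order.disp_t} (P : finPOrderType d) (k : fieldType)
        (S : {fset (P * nat)}) {dR : Order.disp_t} (R : porderType dR)
        (phi : S -> R).

Definition evec (s : S) : {ffun S -> k^o} := [ffun t => ((t == s)%:R)%R].

Definition dvec (b : S * S) : {ffun S -> k^o} := (evec b.1 - evec b.2)%R.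

Definition in_ker (v : {ffun S -> k^o}) : Prop :=
  forall r : R, (\sum_(s : S | phi s == r) v s = 0)%R.

(* B (a list of pairs (s,s') standing for x_s - x_s') is a basis of the kernel *)
Definition kernel_basis (B : seq (S * S)) : Prop :=
  free (map dvec B) /\
  (forall v : {ffun S -> k^o}, v \in <<map dvec B>>%VS <-> in_ker v).

End Lin.

Definition le_PN {d : Order.disp_t} {P : finPOrderType d} (x y : P * nat) : bool :=
  (x.1 <= y.1)%O && (x.2 <= y.2).

(* Main.v *)
Require Import Defs.
From HB Require Import structures.
From mathcomp Require Import all_boot all_order all_algebra.
From mathcomp Require Import finmap.
From mathcomp Require Import mpoly.
From Stdlib Require Import Classical_Prop Classical_Pred_Type ClassicalEpsilon.
From mathcomp Require Import zify.
Import Order.Theory GRing.Theory.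

Set Implicit Arguments.
Unset Strict Implicit.
Unset Printing Implicit Defensive.

Module Aux.
Local Open Scope ring_scope.

Section Ideals.
Variable A : comNzRingType.

Inductive ideal_of (G : A -> Prop) : A -> Prop :=
| Id0 : ideal_of G 0
| IdS c g x : G g -> ideal_of G x -> ideal_of G (c * g + x).

Lemma ideal_gen G g : G g -> ideal_of G g.
Proof. by move=> Gg; rewrite -[g]addr0 -[g]mul1r; apply: IdS => //; apply: Id0. Qed.

Lemma idealD G x y : ideal_of G x -> ideal_of G y -> ideal_of G (x + y).
Proof.
move=> Ix Iy; elim: Ix => [|c g z Gg _ IH]; first by rewrite add0r.
by rewrite -addrA; apply: IdS.
Qed.

Lemma idealM G c x : ideal_of G x -> ideal_of G (c * x).
Proof.
move=> Ix; elim: Ix => [|c' g z Gg _ IH]; first by rewrite mulr0; apply: Id0.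
by rewrite mulrDr mulrA; apply: IdS.
Qed.

Lemma idealN G x : ideal_of G x -> ideal_of G (- x).
Proof. by move=> Ix; rewrite -mulN1r; apply: idealM. Qed.

Lemma idealB G x y : ideal_of G x -> ideal_of G y -> ideal_of G (x - y).
Proof. by move=> Ix Iy; apply: idealD => //; apply: idealN. Qed.

Lemma ideal_sum G (I : Type) (r : seq I) (Pr : pred I) (F : I -> A) :
  (forall i, Pr i -> ideal_of G (F i)) -> ideal_of G (\sum_(i <- r | Pr i) F i).
Proof.
move=> H; elim/big_rec: _ => [|i x Pi Ix]; first exact: Id0.
by apply: idealD => //; apply: H.
Qed.

Lemma ideal_trans G G' x : (forall g, G g -> ideal_of G' g) ->
  ideal_of G x -> ideal_of G' x.
Proof.
move=> H Ix; elim: Ix => [|c g z Gg _ IH]; first exact: Id0.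
by apply: idealD => //; apply: idealM; apply: H.
Qed.

Lemma in_ideal_of G x : in_ideal G x <-> ideal_of G x.
Proof.
split.
  case=> n [c [g [Gg ->]]]; apply: ideal_sum => i _.
  by apply: idealM; apply: ideal_gen.
move=> Ix; elim: Ix => [|c g z Gg _ [n [c' [g' [Gg' ->]]]]].
  by exists 0%N, (fun _ => 0), (fun _ => 0); split; [case|rewrite big_ord0].
exists n.+1, (fun i : 'I_n.+1 => if unlift ord0 i is Some j then c' j else c),
  (fun i : 'I_n.+1 => if unlift ord0 i is Some j then g' j else g).
split; first by move=> i; case: (unlift ord0 i).
rewrite big_ord_recl /= unlift_none; congr (_ + _); apply: eq_bigr => i _.
by rewrite liftK.
Qed.

End Ideals.

Arguments ideal_of {A}.

Lemma ideal_rmorph (A B : comNzRingType) (f : {rmorphism A -> B}) G G' x :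
  (forall g, G g -> ideal_of G' (f g)) -> ideal_of G x -> ideal_of G' (f x).
Proof.
move=> H Ix; elim: Ix => [|c g z Gg _ IH]; first by rewrite rmorph0; apply: Id0.
by rewrite rmorphD rmorphM; apply: idealD => //; apply: idealM; apply: H.
Qed.

Section Monomial.
Variables (n : nat) (k : fieldType).
Variable Gm : 'X_{1..n} -> Prop.
Definition Gpoly (g : {mpoly k[n]}) : Prop := exists m, Gm m /\ g = 'X_[m].
Definition Mdiv (w : 'X_{1..n}) : Prop := exists m, Gm m /\ (m <= w)%MM.

Lemma Mdiv_up w w' : Mdiv w -> (w <= w')%MM -> Mdiv w'.
Proof. by case=> m [Gm_m le] le'; exists m; split => //; apply: lepm_trans le le'. Qed.

Lemma mono_ideal_coef f : ideal_of Gpoly f -> forall w, f@_w != 0 -> Mdiv w.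
Proof.
move=> If; elim: If => [|c g x [m [Gm_m ->]] _ IH] w.
  by rewrite mcoeff0 eqxx.
rewrite mcoeffD => nz.
have [nz1|z1] := eqVneq (c * 'X_[m])@_w 0; last first.
  have : w \in msupp (c * 'X_[m]) by rewrite mcoeff_msupp.
  rewrite (perm_mem (msuppMX _ _)) => /mapP [m' _ ->].
  by exists m; split => //; apply: lem_addr.
by apply: IH; move: nz; rewrite nz1 add0r.
Qed.


Lemma mono_ideal_all f : (forall w, w \in msupp f -> Mdiv w) -> ideal_of Gpoly f.
Proof.
move=> H; rewrite [f]mpolyE big_seq; apply: ideal_sum => w /H [m [Gm_m le]].
rewrite -(submK le) mpolyXD -mul_mpolyC mulrA.
by apply: idealM; apply: ideal_gen; exists m.
Qed.


Lemma coefXM (a : 'I_n) g w : (('X_a : {mpoly k[n]}) * g)@_(w + U_(a))%MM = g@_w.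
Proof. by rewrite mulrC addmC mcoeffMX. Qed.

Lemma coefXM_b (a b : 'I_n) g w : a != b ->
  (('X_b : {mpoly k[n]}) * g)@_(w + U_(a))%MM =
  if (0 < w b)%N then g@_(w + U_(a) - U_(b))%MM else 0.
Proof.
move=> ab; case: ifP => wb.
  have le : (U_(b) <= w + U_(a))%MM.
    by rewrite lep1mP mnmDE mnm1E (negbTE ab) addn0 -lt0n.
  by rewrite -{1}(submK le) coefXM.
apply/eqP; rewrite mcoeff_eq0 mulrC (perm_mem (msuppMX _ _)).
apply/negP => /mapP [m' _ /(congr1 (fun m : 'X_{1..n} => m b))].
rewrite !mnmDE !mnm1E eqxx (negbTE ab) addn0.
by move: wb; case: (w b).
Qed.


Definition Pw (g : {mpoly k[n]}) (a b : 'I_n) (w0 w : 'X_{1..n}) :=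
  [/\ g@_w != 0, ~ Mdiv w, (forall v, v != a -> v != b -> w v = w0 v) &
      (w a + w b = w0 a + w0 b)%N].

Lemma climb (a b : 'I_n) g w0 : a != b ->
  (forall w, ((('X_a - 'X_b) : {mpoly k[n]}) * g)@_w != 0 -> Mdiv w) ->
  forall w, Pw g a b w0 w ->
  exists w1, [/\ Pw g a b w0 w1, Mdiv (w1 + U_(a))%MM & (w a <= w1 a)%N].
Proof.
move=> ab HM w Pww; have ba : b != a by rewrite eq_sym.
move: {2}(w0 a + w0 b - w a)%N (leqnn (w0 a + w0 b - w a)%N) => K.
elim: K w Pww => [|K IH] w [gw nMw agw sw] HK.
all: have [Mwa|nMwa] := Classical_Prop.classic (Mdiv (w + U_(a))%MM);
  first by exists w; split.
all: have hz : ((('X_a - 'X_b) : {mpoly k[n]}) * g)@_(w + U_(a))%MM = 0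
  by apply/eqP; apply/negPn/negP => /HM.
all: move: hz; rewrite mulrBl mcoeffB coefXM coefXM_b //.
all: case: ifP => wb; last by rewrite subr0 => /eqP; rewrite (negbTE gw).
all: move/eqP; rewrite subr_eq0 => /eqP gww.
all: set w' := (w + U_(a) - U_(b))%MM.
all: have w'a : w' a = (w a).+1 by rewrite mnmBE mnmDE !mnm1E eqxx (negbTE ba) addn1 subn0.
all: have w'b : w' b = (w b).-1 by rewrite mnmBE mnmDE !mnm1E eqxx (negbTE ab) addn0 subn1.
- exfalso; move: HK wb; rewrite -sw; lia.
- have Pw' : Pw g a b w0 w'.
    split.
    + by rewrite -gww.
    + move=> Mw'; apply: nMwa; apply: Mdiv_up Mw' _; exact: lem_subr.
    + move=> v va vb; rewrite mnmBE mnmDE !mnm1E eq_sym (negbTE va) eq_sym (negbTE vb).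
      by rewrite addn0 subn0 agw.
    + by rewrite w'a w'b -sw; move: wb; lia.
  have HK' : (w0 a + w0 b - w' a <= K)%N by rewrite w'a; move: HK; lia.
  have [w1 [P1 M1 le1]] := IH w' Pw' HK'.
  by exists w1; split => //; apply: leq_trans le1; rewrite w'a.
Qed.


Lemma Pw_sym g a b w0 w : Pw g a b w0 w -> Pw g b a w0 w.
Proof.
by case=> h1 h2 h3 h4; split => // [v vb va|]; [apply: h3 | rewrite addnC h4 addnC].
Qed.

Lemma criterion (a b : 'I_n) : a != b ->
  (forall w1 w2 w : 'X_{1..n}, Mdiv w1 -> Mdiv w2 ->
     (forall v, v != a -> v != b -> w1 v = w2 v) ->
     (forall v, minn (w1 v) (w2 v) <= w v)%N -> Mdiv w) ->
  forall g, ideal_of Gpoly ((('X_a - 'X_b) : {mpoly k[n]}) * g) -> ideal_of Gpoly g.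
Proof.
move=> ab MEET g Ih; have HM := mono_ideal_coef Ih.
have ba : b != a by rewrite eq_sym.
apply: mono_ideal_all => w0 w0in; apply: NNPP => nM0.
have P0 : Pw g a b w0 w0 by split => //; rewrite -mcoeff_msupp.
have [w1 [[_ nM1 ag1 s1] M1 le1]] := climb ab HM P0.
have HM' : forall w, ((('X_b - 'X_a) : {mpoly k[n]}) * g)@_w != 0 -> Mdiv w.
  by move=> w; rewrite -opprB mulNr mcoeffN oppr_eq0; apply: HM.
have [w2 [[_ nM2 ag2 s2] M2 le2]] := climb ba HM' (Pw_sym P0).
apply: nM1; apply: (MEET _ _ w1 M1 M2).
  move=> v va vb; rewrite !mnmDE !mnm1E eq_sym (negbTE va) eq_sym (negbTE vb).
  by rewrite !addn0 ag1 // ag2.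
move=> v; rewrite !mnmDE !mnm1E.
have [->|va] := eqVneq v a.
  rewrite (negbTE ba) addn0 geq_min; apply/orP; right; move: s1 s2 le1 le2; lia.
have av : (a == v) = false by rewrite eq_sym; apply/negbTE.
by rewrite addn0 geq_min leqnn.
Qed.

End Monomial.

Local Close Scope ring_scope.

Section Comb.
Context {d : Order.disp_t} (P : finPOrderType d).
Implicit Types (psi : {ffun P -> nat}) (x y : P * nat).

Definition reach psi x := [forall q : P, (q < x.1)%O ==> (psi q <= x.2)].
Definition cov psi x := x.2 < psi x.1.

Lemma ascentE psi x : ascent psi x = reach psi x && cov psi x.
Proof. by []. Qed.

Definition fmax psi1 psi2 : {ffun P -> nat} := [ffun p => maxn (psi1 p) (psi2 p)].
Definition fclip psi j : {ffun P -> nat} := [ffun p => minn (psi p) j].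

Lemma isotone_max psi1 psi2 : isotone psi1 -> isotone psi2 -> isotone (fmax psi1 psi2).
Proof.
move=> i1 i2 p q pq; rewrite !ffunE geq_max !leq_max.
by rewrite (i1 _ _ pq) (i2 _ _ pq) orbT.
Qed.

Lemma isotone_clip psi j : isotone psi -> isotone (fclip psi j).
Proof.
move=> i1 p q pq; rewrite !ffunE leq_min !geq_min leqnn orbT.
by rewrite (i1 _ _ pq).
Qed.

Lemma reach_max psi1 psi2 x :
  reach (fmax psi1 psi2) x = reach psi1 x && reach psi2 x.
Proof.
apply/forallP/andP => [H|[/forallP H1 /forallP H2] q].
  split; apply/forallP => q; apply/implyP => qx; have := implyP (H q) qx;
  by rewrite ffunE geq_max => /andP [].
by apply/implyP => qx; rewrite ffunE geq_max (implyP (H1 q) qx) (implyP (H2 q) qx).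
Qed.

Lemma cov_max psi1 psi2 x : cov (fmax psi1 psi2) x = cov psi1 x || cov psi2 x.
Proof. by rewrite /cov ffunE leq_max. Qed.

Lemma reach_clip psi j x : reach (fclip psi j) x = (j <= x.2) || reach psi x.
Proof.
case: (leqP j x.2) => jx /=.
  by apply/forallP => q; apply/implyP => _; rewrite ffunE geq_min jx orbT.
apply/forallP/forallP => H q; apply/implyP => qx; have := implyP (H q) qx;
  rewrite ffunE geq_min.
  by case/orP => //; rewrite leqNgt jx.
by move=> ->.
Qed.

Lemma cov_clip psi j x : cov (fclip psi j) x = cov psi x && (x.2 < j).
Proof. by rewrite /cov ffunE leq_min. Qed.

Definition is_chain (F : pred (P * nat)) :=
  forall x y, F x -> F y -> x.2 <= y.2 -> x = y \/ (x.2 < y.2 /\ (y.1 <= x.1)%O).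

Lemma cov_down psi F x y : isotone psi -> is_chain F -> F x -> F y ->
  x.2 < y.2 -> cov psi y -> cov psi x.
Proof.
move=> iso ch Fx Fy lt; case: (ch x y Fx Fy (ltnW lt)) => [->//|[_ yx]].
rewrite /cov => cy; apply: leq_trans (iso _ _ yx); exact: ltn_trans lt cy.
Qed.

Lemma reach_up psi F x y : is_chain F -> F x -> F y ->
  x.2 < y.2 -> reach psi x -> reach psi y.
Proof.
move=> ch Fx Fy lt rx; case: (ch x y Fx Fy (ltnW lt)) => [<-//|[_ yx]].
apply: contraT => /forallPn [q]; rewrite negb_imply -ltnNge => /andP [qy lty].
move/forallP: rx => /(_ q) /implyP; rewrite (lt_le_trans qy yx) => /(_ isT) qx.
by move: (leq_ltn_trans qx lt); rewrite ltnNge (ltnW lty).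
Qed.

Lemma chain_comp (F : pred (P * nat)) (D1 D2 : pred (P * nat)) : is_chain F ->
  (forall x y, F x -> F y -> x.2 < y.2 -> D1 y -> D1 x) ->
  (forall x y, F x -> F y -> x.2 < y.2 -> D2 y -> D2 x) ->
  (forall x, F x -> D1 x -> D2 x) \/ (forall x, F x -> D2 x -> D1 x).
Proof.
move=> ch d1 d2; apply: NNPP => H.
have [H1 H2] := not_or_and _ _ H.
have [x Hx] := not_all_ex_not _ _ H1; have [y Hy] := not_all_ex_not _ _ H2.
have [Fx Hx'] := imply_to_and _ _ Hx; have [D1x nD2x] := imply_to_and _ _ Hx'.
have [Fy Hy'] := imply_to_and _ _ Hy; have [D2y nD1y] := imply_to_and _ _ Hy'.
case: (ltngtP x.2 y.2) => [xy|yx|e].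
- by apply: nD2x; apply: d2 Fx Fy xy D2y.
- by apply: nD1y; apply: d1 Fy Fx yx D1x.
- case: (ch x y Fx Fy); first by rewrite e.
    by move=> exy; apply: nD2x; rewrite exy.
  by rewrite e ltnn => -[].
Qed.


Lemma fiber_sub F psi1 psi2 j : isotone psi1 -> isotone psi2 -> is_chain F ->
  (forall x, F x -> ascent (fmax psi1 (fclip psi2 j)) x -> ascent psi1 x) \/
  (forall x, F x -> ascent (fmax psi1 (fclip psi2 j)) x -> ascent psi2 x).
Proof.
move=> i1 i2 ch.
have := @chain_comp F (cov psi1) [pred x | cov psi2 x && (x.2 < j)] ch.
case.
- by move=> x y Fx Fy lt; apply: cov_down Fx Fy lt.
- move=> x y Fx Fy lt /andP [cy yj]; apply/andP; split.
    by apply: cov_down Fx Fy lt cy.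
  exact: ltn_trans lt yj.
- move=> H; right => x Fx; rewrite !ascentE reach_max reach_clip cov_max cov_clip.
  case/andP => /andP [_ /orP [jx|r2]] /orP [c1|c2].
  + by have /andP [_] := H x Fx c1; rewrite ltnNge jx.
  + by case/andP: c2 => _; rewrite ltnNge jx.
  + by rewrite r2; have /andP [] := H x Fx c1.
  + by rewrite r2; case/andP: c2.
- move=> H; left => x Fx; rewrite !ascentE reach_max reach_clip cov_max cov_clip.
  case/andP => /andP [r1 _] /orP [c1|c2]; first by rewrite r1 c1.
  by rewrite r1 (H x Fx c2).
Qed.

Lemma thr_exists (F : pred (P * nat)) (L : seq (P * nat)) (D : pred (P * nat)) :
  is_chain F -> (forall x, F x -> x \in L) ->
  (forall x y, F x -> F y -> x.2 < y.2 -> D x -> D y) ->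
  exists j, forall x, F x -> (j <= x.2) = D x.
Proof.
move=> ch HL up.
case: (boolP (has (fun y => F y && D y) L)) => [hasD|noD].
  have ex : exists m, has (fun y => [&& F y, D y & y.2 == m]) L.
    case/hasP: hasD => y yL /andP [Fy Dy]; exists y.2.
    by apply/hasP; exists y => //; rewrite Fy Dy eqxx.
  case: (ex_minnP ex) => j /hasP [y yL /and3P [Fy Dy /eqP yj]] jmin.
  exists j => x Fx; apply/idP/idP => [jx|Dx].
    case: (ch y x Fy Fx); first by rewrite yj.
      by move=> <-.
    by case=> lt _; apply: up Fy Fx lt Dy.
  by apply: jmin; apply/hasP; exists x; rewrite ?HL // Fx Dx eqxx.
exists (\max_(y <- L) y.2).+1 => x Fx.
have -> : D x = false.
  by apply/negbTE; apply: contra noD => Dx; apply/hasP; exists x; rewrite ?HL // Fx.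
apply/negbTE; rewrite -ltnNge ltnS; exact: (leq_bigmax_seq x (HL x Fx)).
Qed.

Lemma fiber_meet (F : pred (P * nat)) (L : seq (P * nat)) psi1 psi2 : isotone psi1 -> isotone psi2 -> is_chain F ->
  (forall x, F x -> x \in L) -> (forall x, F x -> cov psi1 x -> cov psi2 x) ->
  exists j, forall x, F x -> ascent (fmax psi1 (fclip psi2 j)) x ->
     ascent psi1 x && ascent psi2 x.
Proof.
move=> i1 i2 ch HL H12.
have [j Hj] := @thr_exists F L (reach psi2) ch HL (fun x y Fx Fy lt => @reach_up psi2 F x y ch Fx Fy lt).
exists j => x Fx; rewrite !ascentE reach_max reach_clip cov_max cov_clip Hj //.
rewrite orbb; case/andP => /andP [r1 r2] /orP [c1|/andP [c2 lt]].
  by rewrite r1 r2 c1 (H12 x Fx c1).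
by move: lt; rewrite ltnNge Hj // r2.
Qed.

Variable J : {ffun P -> nat} -> Prop.
Hypothesis hJ : poset_ideal_Hom J.

Lemma Jcompl_max psi1 psi2 : Jcompl J psi1 -> isotone psi2 -> Jcompl J (fmax psi1 psi2).
Proof.
case=> i1 nJ1 i2; split; first exact: isotone_max.
move=> J3; apply: nJ1; apply: hJ.2 J3 i1 _ => p; by rewrite ffunE leq_maxl.
Qed.

Lemma comb psi1 psi2 (F0 : pred (P * nat)) (L : seq (P * nat)) : Jcompl J psi1 -> Jcompl J psi2 -> is_chain F0 ->
  (forall x, F0 x -> x \in L) ->
  exists psi3, [/\ Jcompl J psi3,
    (forall F, is_chain F -> (forall x, F x -> ascent psi3 x -> ascent psi1 x) \/
                             (forall x, F x -> ascent psi3 x -> ascent psi2 x)) &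
    (forall x, F0 x -> ascent psi3 x -> ascent psi1 x && ascent psi2 x)].
Proof.
move=> J1 J2 ch HL; have i1 := J1.1; have i2 := J2.1.
have := @chain_comp F0 (cov psi1) (cov psi2) ch.
case.
- by move=> x y Fx Fy lt; apply: cov_down Fx Fy lt.
- by move=> x y Fx Fy lt; apply: cov_down Fx Fy lt.
- move=> H; have [j Hj] := fiber_meet i1 i2 ch HL H.
  exists (fmax psi1 (fclip psi2 j)); split => //.
    by apply: Jcompl_max => //; apply: isotone_clip.
  by move=> F chF; apply: fiber_sub.
- move=> H; have [j Hj] := fiber_meet i2 i1 ch HL H.
  exists (fmax psi2 (fclip psi1 j)); split => //.
  + by apply: Jcompl_max => //; apply: isotone_clip.
  + by move=> F chF; case: (fiber_sub j i2 i1 chF); [right|left].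
  + by move=> x Fx a3; rewrite andbC; apply: Hj.
Qed.

Lemma descent psi0 : Jcompl J psi0 ->
  exists psi, min_gen J psi /\ (forall x, ascent psi x -> ascent psi0 x).
Proof.
move=> J0.
pose K := (\max_(p : P) psi0 p).+1.
pose cnt psi := #|[set x : P * 'I_K | ascent psi (x.1, val x.2)]|.
have step : forall psi, Jcompl J psi -> (forall x, ascent psi x -> ascent psi0 x) ->
    ~ min_gen J psi -> exists psi', [/\ Jcompl J psi',
      (forall x, ascent psi' x -> ascent psi x) & cnt psi' < cnt psi].
  move=> psi Jp sub nmin.
  have [psi' [Jp' [sub' [x /andP [ax nax]]]]] : exists psi', Jcompl J psi' /\
      (forall x, ascent psi' x -> ascent psi x) /\
      (exists x, ascent psi x && ~~ ascent psi' x).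
    by apply: NNPP => H; apply: nmin; split.
  exists psi'; split => //; apply: proper_card; apply/properP; split.
    by apply/subsetP => y; rewrite !inE => /sub'.
  have xK : x.2 < K.
    have := sub x ax; rewrite ascentE => /andP [_ c]; apply: (leq_trans c).
    by apply: leqW; apply: (leq_bigmax x.1).
  by exists (x.1, Ordinal xK); rewrite !inE /= -?surjective_pairing ?ax // .
have main : forall N psi, Jcompl J psi -> (forall x, ascent psi x -> ascent psi0 x) ->
   cnt psi <= N -> exists psi', min_gen J psi' /\ (forall x, ascent psi' x -> ascent psi x).
  elim=> [|N IH] psi Jp sub cN; (have [mp|nmp] := classic (min_gen J psi);
    first by exists psi); have [psi' [Jp' sub' lt]] := step psi Jp sub nmp.
    by move: (leq_trans lt cN).
  have [psi'' [m'' sub'']] := IH psi' Jp' (fun x a => sub x (sub' x a)) (leq_trans lt cN).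
  by exists psi''; split => // x /sub''/sub'.
exact: (main _ psi0 J0 (fun x a => a) (leqnn _)).
Qed.

End Comb.

Local Open Scope ring_scope.

Section Lin.
Context {d : Order.disp_t} (P : finPOrderType d) (k : fieldType)
        (S : {fset (P * nat)}).
Local Notation n := #|{: S}|.
Local Notation polyS := (polyS k S).

Definition lin (f : polyS) : {ffun S -> k^o} := [ffun t => f@_(U_(enum_rank t))%MM].

Lemma linD f g : lin (f + g) = lin f + lin g.
Proof. by apply/ffunP => t; rewrite !ffunE mcoeffD. Qed.

Lemma linN f : lin (- f) = - lin f.
Proof. by apply/ffunP => t; rewrite !ffunE mcoeffN. Qed.

Lemma lin_xv s : lin (xv k s) = evec k s.
Proof.
apply/ffunP => t; rewrite !ffunE /xv mcoeffXU (inj_eq enum_rank_inj) eq_sym.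
by [].
Qed.

Lemma coefMX_U (c : polyS) (i t : 'I_n) :
  (c * 'X_i)@_(U_(t))%MM = c@_0%MM * (i == t)%:R.
Proof.
have [<-|it] := eqVneq i t.
  by rewrite -[X in _@_X](addm0 U_(i))%MM mcoeffMX mulr1.
rewrite mulr0; apply/eqP; rewrite mcoeff_eq0 (perm_mem (msuppMX _ _)).
apply/negP => /mapP [m' _ /(congr1 (fun m : 'X_{1..n} => m i))].
by rewrite !mnmDE !mnm1E eqxx eq_sym (negbTE it).
Qed.

Lemma lin_Mxv (c : polyS) s : lin (c * xv k s) = c@_0%MM *: evec k s.
Proof.
apply/ffunP => t; rewrite !ffunE /xv coefMX_U (inj_eq enum_rank_inj) eq_sym.
by [].
Qed.

Lemma lin_ideal (Bl : seq (S * S)) f :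
  ideal_of (fun g => g \in [seq xv k b.1 - xv k b.2 | b <- Bl]) f ->
  lin f \in <<map (fun b => dvec k b) Bl>>%VS.
Proof.
move=> If; elim: If => [|c g x /mapP [b bin ->] _ IH].
  have -> : lin 0 = 0 by apply/ffunP => t; rewrite !ffunE mcoeff0.
  exact: mem0v.
rewrite linD mulrBr; apply: memvD => //.
have -> : lin (c * xv k b.1 - c * xv k b.2) = c@_0%MM *: dvec k b.
  by rewrite linD linN !lin_Mxv /dvec scalerBr.
by apply: memvZ; apply: memv_span; apply: map_f.
Qed.

End Lin.

Definition pb (Q : Prop) : bool := if excluded_middle_informative Q then true else false.
Lemma pbP (Q : Prop) : pb Q <-> Q.
Proof. by rewrite /pb; case: excluded_middle_informative. Qed.

Lemma sum_ind (T : finType) (k : fieldType) (Pr : pred T) (s : T) :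
  \sum_(u | Pr u) ((u == s)%:R : k) = (Pr s)%:R.
Proof.
case: (boolP (Pr s)) => Ps.
  rewrite (bigD1 s) //= eqxx big1 ?addr0 // => u /andP [_ us].
  by rewrite (negbTE us).
by rewrite big1 // => u Pu; case: eqP => // us; move: Ps; rewrite -us Pu.
Qed.

Section Main.
Context {d : Order.disp_t} (P : finPOrderType d)
  (J : {ffun P -> nat} -> Prop) (hJ : poset_ideal_Hom J)
  (k : fieldType)
  (S : {fset (P * nat)}) (hS : forall x, Supp J x -> x \in S)
  {dR : Order.disp_t} (R : porderType dR) (phi : S -> R)
  (phi_fib : forall s s' : S, s != s' -> phi s = phi s' ->
       ((val s).2 <= (val s').2)%N ->
       ((val s).2 < (val s').2)%N /\ ((val s').1 <= (val s).1)%O)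
  (B : seq (S * S))
  (hBfib : forall b, b \in B -> phi b.1 = phi b.2)
  (hB : kernel_basis k phi B).

Local Notation n := #|{: S}|.
Local Notation polyS := (polyS k S).
Local Notation bsB := [seq xv k b.1 - xv k b.2 | b <- B].

Variable j : nat.
Local Notation Bj := (take j B).
Definition Ibg (g : polyS) := g \in [seq xv k b.1 - xv k b.2 | b <- Bj].
Definition eqv (s t : S) := ideal_of Ibg (xv k s - xv k t).

Lemma eqv_refl s : eqv s s.
Proof. by rewrite /eqv subrr; apply: Id0. Qed.
Lemma eqv_sym s t : eqv s t -> eqv t s.
Proof. by rewrite /eqv => H; rewrite -opprB; apply: idealN. Qed.
Lemma eqv_trans s t u : eqv s t -> eqv t u -> eqv s u.
Proof.
rewrite /eqv => H1 H2; have := idealD H1 H2.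
by rewrite addrA subrK.
Qed.

Definition rep (s : S) : S := odflt s [pick t | pb (eqv s t)].

Lemma rep_eqv s : eqv s (rep s).
Proof.
rewrite /rep; case: pickP => [t /pbP //|H].
by have := H s; move/negbT/negP; case; apply/pbP; apply: eqv_refl.
Qed.

Lemma rep_eq s t : eqv s t -> rep s = rep t.
Proof.
move=> st; rewrite /rep.
have -> : [pick u | pb (eqv s u)] = [pick u | pb (eqv t u)].
  apply: eq_pick => u; apply/idP/idP => /pbP H; apply/pbP.
    exact: eqv_trans (eqv_sym st) H.
  exact: eqv_trans st H.
case: pickP => // H; have := H t; move/negbT/negP; case; apply/pbP; apply: eqv_refl.
Qed.

Lemma lin_dvec s t : lin (xv k s - xv k t) = @dvec _ _ k S (s, t).
Proof. by rewrite linD linN !lin_xv. Qed.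

Lemma eqv_span s t : eqv s t -> @dvec _ _ k S (s, t) \in <<map (fun b => dvec k b) Bj>>%VS.
Proof. by move=> H; rewrite -lin_dvec; apply: lin_ideal. Qed.

Lemma eqv_phi s t : eqv s t -> phi s = phi t.
Proof.
move=> /eqv_span H.
have H' : @dvec _ _ k S (s, t) \in <<map (fun b => dvec k b) B>>%VS.
  apply: (subvP (sub_span _)) H => v /mapP [b bin ->]; apply: map_f.
  exact: mem_take bin.
have := (hB.2 _).1 H' (phi s).
rewrite (eq_bigr (fun u => ((u == s)%:R - (u == t)%:R : k))); last first.
  by move=> u _; rewrite /dvec /evec !ffunE.
rewrite sumrB !sum_ind eqxx.
case: eqP => // _ /eqP; rewrite subr0 oner_eq0 //.
Qed.

Definition lq : n.-tuple polyS := [tuple xv k (rep (enum_val i)) | i < n].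
Definition sigm (f : polyS) : polyS := comp_mpoly lq f.

Lemma sig_xv s : sigm (xv k s) = xv k (rep s).
Proof. by rewrite /sigm /xv comp_mpolyXU -tnth_nth tnth_mktuple enum_rankK. Qed.

Lemma sig1 : sigm 1 = 1.
Proof. exact: comp_mpoly1. Qed.

Lemma sigM f g : sigm (f * g) = sigm f * sigm g.
Proof. exact: rmorphM. Qed.

Lemma sig_diff f : ideal_of Ibg (f - sigm f).
Proof.
have Mc : forall p q, ideal_of Ibg (p - sigm p) -> ideal_of Ibg (q - sigm q) ->
    ideal_of Ibg (p * q - sigm (p * q)).
  move=> p q Hp Hq; rewrite sigM.
  have -> : p * q - sigm p * sigm q = q * (p - sigm p) + sigm p * (q - sigm q).
    by rewrite !mulrBr addrA [q * p]mulrC [q * sigm p]mulrC subrK.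
  by apply: idealD; apply: idealM.
have Xi : forall i, ideal_of Ibg ('X_i - sigm 'X_i).
  move=> i; have -> : ('X_i : polyS) = xv k (enum_val i) by rewrite /xv enum_valK.
  by rewrite sig_xv; apply: rep_eqv.
have Xm : forall m, ideal_of Ibg ('X_[m] - sigm 'X_[m]).
  move=> m; rewrite mpolyXE_id; apply: (big_ind (fun p => ideal_of Ibg (p - sigm p))).
  - by rewrite sig1 subrr; apply: Id0.
  - exact: Mc.
  - move=> i _; elim: (m i) => [|e IH]; first by rewrite expr0 sig1 subrr; apply: Id0.
    by rewrite exprS; apply: Mc.
have -> : f - sigm f = \sum_(m <- msupp f) (f@_m *: 'X_[m] - sigm (f@_m *: 'X_[m])).
  rewrite sumrB -mpolyE; congr (_ - _); rewrite {1}[f]mpolyE; exact: (raddf_sum (comp_mpoly lq)).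
apply: ideal_sum => m _.
rewrite /sigm linearZ /= -/(sigm _) -scalerBr -mul_mpolyC; apply: idealM; exact: Xm.
Qed.

Definition mu (psi : {ffun P -> nat}) : 'X_{1..n} :=
  (\sum_(s : S | ascent psi (val s)) U_(enum_rank (rep s)))%MM.

Lemma sig_mon psi : sigm (monS k S (ascent psi)) = 'X_[mu psi].
Proof.
rewrite /mu (big_morph (fun m => 'X_[m]) (@mpolyXD _ _) (@mpolyX0 _ _)).
rewrite /sigm /monS rmorph_prod; apply: eq_bigr => s _.
exact: (sig_xv s).
Qed.

Definition Gmon (m : 'X_{1..n}) : Prop := exists psi, min_gen J psi /\ m = mu psi.

Lemma Ib_gens g : Ibg g -> gens_with (LP_gen (k:=k) (S:=S) J) (take j bsB) g.
Proof. by rewrite /Ibg => H; right; rewrite -map_take. Qed.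

Lemma Ichar f : ideal_of (gens_with (LP_gen (k:=k) (S:=S) J) (take j bsB)) f <->
  ideal_of (@Gpoly n k Gmon) (sigm f).
Proof.
split => H.
  apply: (ideal_rmorph (f := comp_mpoly lq)) H => g [[psi [mg ->]]|].
    by apply: ideal_gen; exists (mu psi); split; [exists psi|rewrite -sig_mon].
  rewrite -map_take => /mapP [b bin ->]; rewrite rmorphB /= -!/(sigm _) !sig_xv.
  rewrite (@rep_eq b.1 b.2) ?subrr; first exact: Id0.
  by apply: ideal_gen; rewrite /Ibg; apply: map_f.
have Hd : forall p, ideal_of (gens_with (LP_gen (k:=k) (S:=S) J) (take j bsB)) (p - sigm p).
  move=> p; apply: (@ideal_trans _ Ibg); last exact: sig_diff.
  by move=> g Hg; apply: ideal_gen; apply: Ib_gens.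
rewrite -(subrK (sigm f) f); apply: idealD; last first.
  apply: (ideal_trans _ H) => g [m [[psi [mg ->]] ->]]; rewrite -sig_mon.
  set q := monS k S (ascent psi).
  have -> : sigm q = q - (q - sigm q) by rewrite opprB addrCA subrr addr0.
  by apply: idealB; [apply: ideal_gen; left; exists psi|apply: Hd].
exact: Hd.
Qed.

Lemma muE psi v : mu psi v = (\sum_(s : S | ascent psi (val s)) (enum_rank (rep s) == v))%N.
Proof. by rewrite /mu mnm_sumE; apply: eq_bigr => s _; rewrite mnm1E. Qed.

Lemma mu_le psiA psiB v :
  (forall s : S, enum_rank (rep s) == v -> ascent psiA (val s) -> ascent psiB (val s)) ->
  (mu psiA v <= mu psiB v)%N.
Proof.
move=> H; rewrite !muE big_mkcond [X in (_ <= X)%N]big_mkcond /=.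
apply: leq_sum => s _; case: (boolP (enum_rank (rep s) == v)) => e.
  by case: (boolP (ascent psiA (val s))) => // /(H s e) ->.
by case: ifP; case: ifP.
Qed.

Definition fib (r : R) : pred (P * nat) :=
  fun x => [exists s : S, (val s == x) && (phi s == r)].

Lemma chain_fib r : is_chain (fib r).
Proof.
move=> x y /existsP [s /andP [/eqP <- /eqP sr]] /existsP [t /andP [/eqP <- /eqP tr]] le.
have [->|st] := eqVneq s t; first by left.
by right; apply: phi_fib => //; rewrite sr tr.
Qed.

Lemma fib_L r x : fib r x -> x \in [seq val s | s : S].
Proof. by case/existsP => s /andP [/eqP <- _]; apply: map_f; rewrite mem_enum. Qed.

Lemma fib_val (s : S) : fib (phi s) (val s).
Proof. by apply/existsP; exists s; rewrite !eqxx. Qed.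

Lemma phi_rep s : phi (rep s) = phi s.
Proof. by symmetry; apply: eqv_phi; apply: rep_eqv. Qed.

Lemma meet (a c : S) : phi a = phi c ->
  forall w1 w2 w : 'X_{1..n}, Mdiv Gmon w1 -> Mdiv Gmon w2 ->
  (forall v, v != enum_rank (rep a) -> v != enum_rank (rep c) -> w1 v = w2 v) ->
  (forall v, minn (w1 v) (w2 v) <= w v)%N -> Mdiv Gmon w.
Proof.
move=> hac w1 w2 w [m1 [[psi1 [mg1 ->]] le1]] [m2 [[psi2 [mg2 ->]] le2]] agree mn.
have [psi3 [J3 Hall H0]] := comb hJ mg1.1 mg2.1 (@chain_fib (phi a)) (@fib_L (phi a)).
have [psi4 [mg4 sub4]] := descent J3.
exists (mu psi4); split; first by exists psi4.
apply/mnm_lepP => v.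
have le43 : (mu psi4 v <= mu psi3 v)%N by apply: mu_le => s _; apply: sub4.
apply: (leq_trans le43); apply: leq_trans (mn v).
have fibv : forall s : S, enum_rank (rep s) == v -> fib (phi (enum_val v)) (val s).
  move=> s /eqP <-; rewrite enum_rankK phi_rep; exact: fib_val.
move/mnm_lepP: le1 => /(_ v) le1; move/mnm_lepP: le2 => /(_ v) le2.
have [e|ne] := eqVneq (phi (enum_val v)) (phi a).
  rewrite leq_min; apply/andP; split.
    apply: leq_trans le1; apply: mu_le => s ev a3.
    by have := fibv s ev; rewrite e => fv; have /andP [] := H0 _ fv a3.
  apply: leq_trans le2; apply: mu_le => s ev a3.
  by have := fibv s ev; rewrite e => fv; have /andP [] := H0 _ fv a3.
have va : v != enum_rank (rep a).
  by apply: contra ne => /eqP ->; rewrite enum_rankK phi_rep.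
have vc : v != enum_rank (rep c).
  by apply: contra ne => /eqP ->; rewrite enum_rankK phi_rep hac.
rewrite -(agree v va vc) minnn.
case: (Hall _ (@chain_fib (phi (enum_val v)))) => H.
  by apply: leq_trans le1; apply: mu_le => s ev a3; apply: H (fibv s ev) a3.
rewrite (agree v va vc); apply: leq_trans le2; apply: mu_le => s ev a3.
exact: H (fibv s ev) a3.
Qed.

Lemma sigB x y : sigm (x - y) = sigm x - sigm y.
Proof. exact: rmorphB. Qed.

Lemma not_eqv (b0 : S * S) : (j < size B)%N -> ~ eqv (nth b0 B j).1 (nth b0 B j).2.
Proof.
move=> hj /eqv_span; rewrite -surjective_pairing => H.
have := hB.1.
rewrite -(cat_take_drop j B) (drop_nth b0 hj) map_cat /=.
rewrite (perm_free (permEl (perm_catCA _ [:: _] _))) /= free_cons => /andP [/negP nin _].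
apply: nin; apply: (subvP (sub_span _)) H => v vin; rewrite mem_cat vin.
by [].
Qed.

Lemma step_reg (b0 : S * S) : (j < size B)%N -> forall f,
  ideal_of (gens_with (LP_gen (k:=k) (S:=S) J) (take j bsB)) (nth 0 bsB j * f) ->
  ideal_of (gens_with (LP_gen (k:=k) (S:=S) J) (take j bsB)) f.
Proof.
move=> hj f; rewrite (nth_map b0) // => /Ichar H; apply/Ichar.
set a := (nth b0 B j).1 in H *; set c := (nth b0 B j).2 in H *.
move: H; rewrite sigM sigB !sig_xv => H.
have hac : phi a = phi c by apply: hBfib; apply: mem_nth.
apply: (criterion _ _ H).
  apply/negP => /eqP /enum_rank_inj e; apply: (@not_eqv b0 hj).
  by apply: eqv_trans (rep_eqv a) _; rewrite e; apply: eqv_sym; apply: rep_eqv.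
exact: meet hac.
Qed.

End Main.

Local Close Scope ring_scope.

Lemma ideal_zero (A : comNzRingType) (x : A) : ideal_of (fun g : A => g = 0%R) x -> x = 0%R.
Proof. by elim=> [|c g y -> _ ->] //; rewrite mulr0 addr0. Qed.

Lemma mingen_asc {d : Order.disp_t} (P : finPOrderType d) (J : {ffun P -> nat} -> Prop)
  (hJ : poset_ideal_Hom J) (S : {fset (P * nat)}) (hS : forall x, Supp J x -> x \in S) :
  (exists psi, J psi) -> forall psi, min_gen J psi -> exists s : S, ascent psi (val s).
Proof.
move=> [psi0 J0] psi mg.
have [p0 pos0] : exists p, (0 < psi p)%N.
  apply: NNPP => H; apply: mg.1.2; apply: hJ.2 J0 mg.1.1 _ => p.
  by case: (ltnP 0 (psi p)) => [pp|]; [case: H; exists p|rewrite leqn0 => /eqP ->].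
pose cnt (p : P) := #|[set q : P | (q < p)%O]|.
case: (@arg_minnP P p0 (fun p => 0 < psi p)%N cnt pos0) => p pp pmin.
have asc : ascent psi (p, 0%N).
  rewrite /ascent /= pp andbT; apply/forallP => q; apply/implyP => qp.
  rewrite leqn0; apply: contraT; rewrite -lt0n => qpos.
  have lt : (cnt q < cnt p)%N.
    apply: proper_card; apply/properP; split.
      by apply/subsetP => x; rewrite !inE => xq; apply: lt_trans xq qp.
    by exists q; rewrite !inE ?ltxx.
  by move: (pmin q qpos); rewrite leqNgt lt.
have inS : (p, 0%N) \in S by apply: hS; exists psi; split.
by exists (FSetSub inS).
Qed.


End Aux.
Import Aux.

Theorem theorem2p1
  (d : Order.disp_t) (P : finPOrderType d)
  (J : {ffun P -> nat} -> Prop) (hJ : poset_ideal_Hom J)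
  (k : fieldType)
  (S : {fset (P * nat)}) (hS : forall x, Supp J x -> x \in S)
  (dR : Order.disp_t) (R : porderType dR) (phi : S -> R)
  (phi_iso : forall s s' : S, le_PN (val s) (val s') -> (phi s <= phi s')%O)
  (phi_fib : forall s s' : S, s != s' -> phi s = phi s' ->
       (val s).2 <= (val s').2 ->
       (val s).2 < (val s').2 /\ ((val s').1 <= (val s).1)%O)
  (B : seq (S * S))
  (hBfib : forall b, b \in B -> phi b.1 = phi b.2)
  (hB : kernel_basis k phi B) :
  let bs := [seq (xv k b.1 - xv k b.2)%R | b <- B] in
  weakly_regular (LP_gen (k:=k) (S:=S) J) bs /\
  ((exists psi, J psi) -> regular_seq (LP_gen (k:=k) (S:=S) J) bs).
Proof.
move=> bs.
have W : weakly_regular (LP_gen (k:=k) (S:=S) J) bs.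
  move=> j hj f; rewrite !in_ideal_of => H.
  have hj' : j < size B by move: hj; rewrite size_map.
  have b0 : S * S by move: hj'; case: (B) => // b0.
  exact: (step_reg hJ phi_fib hBfib hB b0 hj' H).
split => // ne; split => //; rewrite in_ideal_of => H1.
pose z := comp_mpoly [tuple (0 : polyS k S)%R | i < #|{: S}|].
have zx : forall s, z (xv k s) = 0%R.
  by move=> s; rewrite /z /xv comp_mpolyXU -tnth_nth tnth_mktuple.
have := @ideal_rmorph _ _ (comp_mpoly [tuple (0 : polyS k S)%R | i < #|{: S}|])
  _ (fun g => g = 0%R) _ _ H1.
move=> Hr; have : ideal_of (fun g : polyS k S => g = 0%R) 1%R.
  rewrite -(comp_mpoly1 [tuple (0 : polyS k S)%R | i < #|{: S}|]); apply: Hr.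
  move=> g [[psi [mg ->]]|].
    have [s as_s] := mingen_asc hJ hS ne mg.
    apply: ideal_gen; rewrite /monS rmorph_prod (bigD1 s) //=.
    by rewrite [X in (X * _)%R](_ : _ = 0%R) ?mul0r //; exact: zx s.
  move=> /mapP [b _ ->]; apply: ideal_gen; rewrite rmorphB.
  apply/eqP; rewrite subr_eq0; apply/eqP; exact: (etrans (zx b.1) (esym (zx b.2))).
by move/ideal_zero => /eqP; rewrite oner_eq0.
Qed.
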